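(* Let $k\ge1$ and let $w_1,w_2\in\mathcal V_k$ be such that $(w_1,w_2)$ is a weak CLT pair. Then $\mathrm{wt}((w_1,w_2))\le k$ if $k$ is odd, and $\mathrm{wt}((w_1,w_2))\le k-1$ if $k$ is even.
   Context: A word is a finite sequence $w=(s_1,\dots,s_m)$ of positive integers; $\ell(w)=m$; closed if $s_1=s_m$; $\mathrm{supp}(w)$ its letter set. $E_w=\{\{s_i,s_{i+1}\}:1\le i\le m-1\}$ (undirected edges); a self edge is $\{u,u\}$. $N_e^w=\#\{i\le m-1:\{s_i,s_{i+1}\}=e\}$. For $a=(w_1,w_2)$: $\mathrm{wt}(a)=\#(\mathrm{supp}(w_1)\cup\mathrm{supp}(w_2))$, $E_a=E_{w_1}\cup E_{w_2}$, $N_e^a=N_e^{w_1}+N_e^{w_2}$. A weak CLT pair is a pair with $N_e^a\ge2$ for all $e\in E_a$ and $E_{w_1}\cap E_{w_2}\ne\emptyset$. $\mathcal V_k$ is the set of closed words of length $k+1$ whose first letter is $1$ and which have at least one self edge. *)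

(* Defs.v *)
From mathcomp Require Import all_boot.
Set Implicit Arguments. Unset Strict Implicit. Unset Printing Implicit Defensive.

(* A word is a finite sequence of positive integers, represented by seq nat
   together with the positivity side condition [all (fun s => 0 < s) w]. *)

(* Undirected edge {u,v}, normalised as the ordered pair (min, max). *)
Definition uedge (u v : nat) : nat * nat := (minn u v, maxn u v).

Definition edge_list (w : seq nat) : seq (nat * nat) :=
  [seq uedge p.1 p.2 | p <- zip w (behead w)].

(* E_w as a predicate: e \in edge_list w. *)
Definition Nw (e : nat * nat) (w : seq nat) : nat := count_mem e (edge_list w).

Definition is_word (w : seq nat) : bool := all (fun s => 0 < s) w.

Definition closed_word (w : seq nat) : bool :=
  (0 < size w) && (head 0 w == last 0 w).

Definition self_edge (e : nat * nat) : bool := e.1 == e.2.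

Definition has_self_edge (w : seq nat) : bool := has self_edge (edge_list w).

Definition in_Vk (k : nat) (w : seq nat) : bool :=
  [&& is_word w, size w == k.+1, closed_word w, head 0 w == 1
    & has_self_edge w].

Definition wt (w1 w2 : seq nat) : nat := size (undup (w1 ++ w2)).

Definition Npair (e : nat * nat) (w1 w2 : seq nat) : nat := Nw e w1 + Nw e w2.

Definition weak_CLT_pair (w1 w2 : seq nat) : Prop :=
  (forall e, e \in edge_list w1 ++ edge_list w2 -> 2 <= Npair e w1 w2) /\
  (exists e, (e \in edge_list w1) && (e \in edge_list w2)).

(* Main.v *)
Require Import Defs.
From mathcomp Require Import all_boot.
From mathcomp Require Import zify.

Definition nv (s : seq nat) := size (undup s).
Definition ns (e : nat * nat) : bool := ~~ self_edge e.
Definition ne (E : seq (nat * nat)) := size (undup (filter ns E)).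
Definition inV (V : seq nat) (E : seq (nat * nat)) :=
  forall e, e \in E -> (e.1 \in V) && (e.2 \in V).
Definition proper (c : nat -> bool) (E : seq (nat * nat)) :=
  forall e, e \in E -> ns e -> c e.1 != c e.2.

Lemma size_undup_eqi (T : eqType) (s t : seq T) : s =i t ->
  size (undup s) = size (undup t).
Proof. by move=> h; apply: perm_size; apply: perm_undup. Qed.

Lemma nv_cons y s : nv (y :: s) = (y \notin s) + nv s.
Proof. by rewrite /nv /=; case: (y \in s). Qed.

Lemma count2_gen (T : eqType) (s : seq T) : forall (L : seq T) (p : pred T),
  uniq s -> (forall e, e \in s -> p e /\ 2 <= count_mem e L) ->
  2 * size s <= count p L.
Proof.
elim: s => [|e s IH] L p //= /andP[ens us] H.
have [pe ce] := H e (mem_head _ _).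
have sp : forall L', count p L' = count_mem e L' + count (fun x => p x && (x != e)) L'.
  elim => //= x L' ->; case: (eqVneq x e) => [->|nxe]; rewrite ?pe ?eqxx /= ?andbT; lia.
rewrite sp.
have := IH L (fun x => p x && (x != e)) us.
have H' : forall x, x \in s -> (p x && (x != e)) /\ 2 <= count_mem x L.
  move=> x xs; have [px cx] := H x ltac:(by rewrite inE xs orbT).
  split => //; rewrite px /=; apply/eqP => xe; by rewrite -xe xs in ens.
move/(_ H'); lia.
Qed.

Lemma count2 (p : pred (nat * nat)) (L : seq (nat * nat)) :
  (forall e, e \in L -> 2 <= count_mem e L) -> 2 * size (undup (filter p L)) <= count p L.
Proof.
move=> H; apply: count2_gen; first exact: undup_uniq.
move=> e; rewrite mem_undup mem_filter => /andP[pe eL]; split => //; exact: H.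
Qed.

Lemma edge_list_cons x y w : edge_list (x :: y :: w) = uedge x y :: edge_list (y :: w).
Proof. by []. Qed.

Lemma edge_list_size x w : size (edge_list (x :: w)) = size w.
Proof. by rewrite /edge_list size_map size_zip /= minnE; lia. Qed.

Lemma self_uedge x y : self_edge (uedge x y) = (x == y).
Proof.
rewrite /self_edge /uedge /=; apply/idP/idP => /eqP h; apply/eqP; lia.
Qed.

Lemma uedge_ends x y :
  [/\ (uedge x y).1 \in [:: x; y], (uedge x y).2 \in [:: x; y],
      x \in [:: (uedge x y).1; (uedge x y).2] & y \in [:: (uedge x y).1; (uedge x y).2]].
Proof.
rewrite /uedge; case: (leqP x y) => h /=; by rewrite !inE !eqxx ?orbT.
Qed.

Lemma c_uedge (c : nat -> bool) x y : (c (uedge x y).1 != c (uedge x y).2) = (c x != c y).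
Proof.
rewrite /uedge; case: (leqP x y) => h //=. by rewrite eq_sym.
Qed.

Lemma inV_step x y V E : x \in V -> inV V E -> inV (y :: V) (uedge x y :: E).
Proof.
move=> xV hV e; rewrite inE => /orP[/eqP->|eE].
  have [h1 h2 _ _] := uedge_ends x y.
  move: h1 h2; rewrite !inE => /orP[] /eqP -> /orP[] /eqP ->; by rewrite ?eqxx ?xV ?orbT.
by have /andP[a b] := hV e eE; rewrite !inE a b !orbT.
Qed.

Lemma step x y V E : x \in V -> inV V E ->
  nv (y :: V) + ne E <= nv V + ne (uedge x y :: E) /\
  (nv (y :: V) + ne E = nv V + ne (uedge x y :: E) -> forall c, proper c E ->
     exists c', proper c' (uedge x y :: E) /\ forall z, z \in V -> c' z = c z).
Proof.
move=> xV hV; rewrite nv_cons /ne /=.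
case yV: (y \in V) => /=.
  case nsu: (ns (uedge x y)); rewrite /= ?nv_cons ?add0n; last first.
    split => // _ c pc; exists c; split => //.
    move=> e; rewrite inE => /orP[/eqP->|]; [by rewrite nsu | exact: pc].
  case uin: (uedge x y \in [seq e <- E | ns e]) => /=; last by split; [lia|lia].
  split; first lia.
  move=> _ c pc; exists c; split => //.
  move: uin; rewrite mem_filter => /andP[_ uE].
  move=> e; rewrite inE => /orP[/eqP->|]; [exact: pc | exact: pc].
have nxy : x != y by apply/eqP => exy; rewrite -exy xV in yV.
have nsu : ns (uedge x y) by rewrite /ns self_uedge.
have [h1 h2 h3 h4] := uedge_ends x y.
have uE : uedge x y \notin E.
  apply/negP => /hV /andP[a b]; move: h4; rewrite !inE => /orP[] /eqP ye;
  by rewrite -ye yV in a b.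
rewrite nsu /= mem_filter (negbTE uE) andbF /=.
split; first lia.
move=> _ c pc; exists (fun z => if z == y then ~~ c x else c z); split; last first.
  by move=> z zV; case: eqP => // zy; rewrite zy yV in zV.
move=> e; rewrite inE => /orP[/eqP->|eE] nse.
  move: h1 h2 nse; rewrite /ns /self_edge !inE => /orP[] /eqP -> /orP[] /eqP -> nse;
  rewrite ?eqxx ?(negbTE nxy) //=.
  - by rewrite eqxx in nse.
  - by case: (c x).
  - by case: (c x).
  - by rewrite eqxx in nse.
have /andP[a b] := hV e eE.
have ne1 : e.1 != y by apply/eqP => ey; rewrite ey yV in a.
have ne2 : e.2 != y by apply/eqP => ey; rewrite ey yV in b.
rewrite (negbTE ne1) (negbTE ne2); exact: pc.
Qed.

Lemma walk (w : seq nat) : forall x V E, x \in V -> inV V E ->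
  [/\ inV (rev w ++ V) (rev (edge_list (x :: w)) ++ E),
      nv (rev w ++ V) + ne E <= nv V + ne (rev (edge_list (x :: w)) ++ E) &
      (nv (rev w ++ V) + ne E = nv V + ne (rev (edge_list (x :: w)) ++ E) ->
       forall c, proper c E -> exists c', proper c' (rev (edge_list (x :: w)) ++ E) /\
         forall z, z \in V -> c' z = c z)].
Proof.
elim: w => [|y w IH] x V E xV hV.
  split => //= _ c pc; by exists c.
rewrite edge_list_cons !rev_cons !cat_rcons.
have [s1 s2] := step x y V E xV hV.
have [i1 i2 i3] := IH y (y :: V) (uedge x y :: E) (mem_head _ _) (inV_step x y V E xV hV).
set A := nv (rev w ++ y :: V) in i2 i3 *; set B := nv (y :: V) in s1 s2 i2 i3; set C := ne (uedge x y :: E) in s1 s2 i2 i3; set D := ne (rev (edge_list (y :: w)) ++ uedge x y :: E) in i2 i3 *.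
split => //; first lia.
move=> eq c pc.
have [c1 [pc1 ag1]] := s2 ltac:(lia) c pc.
have [c2 [pc2 ag2]] := i3 ltac:(lia) c1 pc1.
exists c2; split => // z zV; rewrite ag2; [exact: ag1 | by rewrite inE zV orbT].
Qed.

Lemma parity (c : nat -> bool) (w : seq nat) : forall x,
  proper c (edge_list (x :: w)) ->
  odd (count ns (edge_list (x :: w))) = (c x != c (last x w)).
Proof.
elim: w => [|y w IH] x /=.
  by rewrite eqxx.
rewrite edge_list_cons => H.
have Ht : proper c (edge_list (y :: w)) by move=> e eE; apply: H; rewrite inE eE orbT.
rewrite /= oddD (IH y Ht) /ns self_uedge.
case: (eqVneq x y) => [->|nxy] /=; first by case: (c y != c (last y w)).
have := H _ (mem_head _ _); rewrite /ns self_uedge nxy c_uedge => /(_ isT).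
by case: (c x); case: (c y); case: (c (last y w)).
Qed.

Theorem mainTheorem14 (k : nat) (w1 w2 : seq nat) :
  1 <= k -> in_Vk k w1 -> in_Vk k w2 -> weak_CLT_pair w1 w2 ->
  (odd k -> wt w1 w2 <= k) /\ (~~ odd k -> wt w1 w2 <= k.-1).
Proof.
move=> k1 /and5P[_ /eqP s1 /andP[_ cl1] /eqP h1 hs1]
  /and5P[_ /eqP s2 _ /eqP h2 hs2] [Hcnt _].
case: w1 s1 cl1 h1 hs1 Hcnt => [//|a1 t1] s1 cl1 /= h1 hs1 Hcnt; subst a1.
case: w2 s2 h2 hs2 Hcnt => [//|a2 t2] s2 /= h2 hs2 Hcnt; subst a2.
set L := edge_list (1 :: t1) ++ edge_list (1 :: t2).
have Hc : forall e, e \in L -> 2 <= count_mem e L.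
  by move=> e eL; rewrite count_cat; apply: Hcnt.
have i0 : inV [:: 1] [::] by move=> e; rewrite in_nil.
have [i1 A1 B1] := walk t1 1 [:: 1] [::] (mem_head _ _) i0.
have m1 : 1 \in rev t1 ++ [:: 1] by rewrite mem_cat mem_head orbT.
have [_ A2 _] := walk t2 1 _ _ m1 i1.
have Ewt : nv (rev t2 ++ rev t1 ++ [:: 1]) = wt (1 :: t1) (1 :: t2).
  rewrite /wt /nv; apply: size_undup_eqi => z.
  rewrite !(mem_cat, mem_rev, inE).
  by case: (z == 1); case: (z \in t1); case: (z \in t2).
have Ene : ne (rev (edge_list (1 :: t2)) ++ rev (edge_list (1 :: t1)) ++ [::])
         = size (undup (filter ns L)).
  rewrite /ne; apply: size_undup_eqi => z.
  rewrite !(mem_filter, mem_cat, mem_rev) /= orbF.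
  by case: (ns z); case: (z \in edge_list (1 :: t1)); case: (z \in edge_list (1 :: t2)).
have Cn := count2 ns L Hc.
have Cs := count2 self_edge L Hc.
have Csum : count self_edge L + count ns L = 2 * k.
  rewrite count_predC /L size_cat !edge_list_size; move: s1 s2 => /= s1 s2; lia.
have Dl : 0 < size (undup (filter self_edge L)).
  have : has self_edge L by rewrite has_cat -/(has_self_edge (1 :: t1)) hs1.
  rewrite has_filter => hne; rewrite lt0n size_eq0.
  by apply: contra hne => /eqP/undup_nil ->.
have n1 : nv [:: 1] = 1 by [].
have n0 : ne [::] = 0 by [].
rewrite Ewt in A2; rewrite Ene in A2.
set W := wt _ _ in A2 *.
set Dn := size (undup (filter ns L)) in A2 Cn.
set Ds := size (undup (filter self_edge L)) in Cs Dl.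
set N1 := nv (rev t1 ++ [:: 1]) in A1 A2 B1.
set M1 := ne (rev (edge_list (1 :: t1)) ++ [::]) in A1 A2 B1.
have Wk : W <= k by lia.
split => // ek.
suff : W != k by lia.
apply/eqP => Wk'.
have [c [pc _]] := B1 ltac:(lia) (fun _ => false) ltac:(by move=> e; rewrite in_nil).
have pc1 : proper c (edge_list (1 :: t1)).
  by move=> e eE; apply: pc; rewrite mem_cat mem_rev eE.
have hp := parity c t1 1 pc1.
move: cl1; rewrite /= => /eqP cl1; rewrite -cl1 eqxx in hp.
have cs1 : 0 < count self_edge (edge_list (1 :: t1)) by rewrite -has_count.
have cs2 : 0 < count self_edge (edge_list (1 :: t2)) by rewrite -has_count.
have Ecs : count self_edge L = count self_edge (edge_list (1 :: t1)) + count self_edge (edge_list (1 :: t2)) by rewrite count_cat.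
have Ek : count self_edge (edge_list (1 :: t1)) + count ns (edge_list (1 :: t1)) = size t1.
  by rewrite -(edge_list_size 1) -(count_predC self_edge).
have st1 : size t1 = k by move: s1 => /= /eqP; rewrite eqSS => /eqP.
have : odd k.
  have -> : k = count self_edge (edge_list (1 :: t1)) + count ns (edge_list (1 :: t1)) by lia.
  have -> : count self_edge (edge_list (1 :: t1)) = 1 by lia.
  by rewrite oddD hp.
by rewrite (negbTE ek).
Qed.
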